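(* Let $Z$ and $W$ be random variables with $P(Z>u)>0$ and $P(W>u)>0$ for all $u>0$, and let $Y$ be a random variable independent of $Z$ and of $W$ satisfying condition $(\mathrm{P})$. If $\lim_{u\to\infty}P(Z>u)/P(W>u)=1$, then $\lim_{u\to\infty}P(Y+Z>u)/P(Y+W>u)=1$; if $\lim_{u\to\infty}P(Z>u)/P(W>u)=0$, then $\lim_{u\to\infty}P(Y+Z>u)/P(Y+W>u)=0$.
   Context: A random variable $Y$ satisfies condition $(\mathrm{P})$ if $P(Y>u)>0$ for all $u>0$ and there is a constant $a>0$ with $\lim_{u\to\infty}P(Y>u+a)/P(Y>u)=0$. *)

(* Defs.v *)
From Stdlib Require Import Reals Lra.
Open Scope R_scope.
Set Implicit Arguments.

Definition is_sigma_algebra (T : Type) (S : (T -> Prop) -> Prop) : Prop :=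
  S (fun _ => True) /\
  (forall A, S A -> S (fun x => ~ A x)) /\
  (forall A : nat -> (T -> Prop), (forall n, S (A n)) -> S (fun x => exists n, A n x)).

Definition borel (B : R -> Prop) : Prop :=
  forall S : (R -> Prop) -> Prop, is_sigma_algebra S ->
    (forall a b, S (fun x => a < x < b)) -> S B.

Record prob_space := {
  Omega : Type;
  event : (Omega -> Prop) -> Prop;
  event_sigma : is_sigma_algebra event;
  Pr : (Omega -> Prop) -> R;
  Pr_nonneg : forall A, event A -> 0 <= Pr A;
  Pr_full : Pr (fun _ => True) = 1;
  Pr_sigma_additive : forall A : nat -> (Omega -> Prop),
    (forall n, event (A n)) ->
    (forall m n, m <> n -> forall w, A m w -> A n w -> False) ->
    infinite_sum (fun n => Pr (A n)) (Pr (fun w => exists n, A n w))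
}.

Definition random_variable {Ps : prob_space} (X : Omega Ps -> R) : Prop :=
  forall B, borel B -> event Ps (fun w => B (X w)).

Definition independent {Ps : prob_space} (X Y : Omega Ps -> R) : Prop :=
  forall A B, borel A -> borel B ->
    Pr Ps (fun w => A (X w) /\ B (Y w)) =
    Pr Ps (fun w => A (X w)) * Pr Ps (fun w => B (Y w)).

Definition tail {Ps : prob_space} (X : Omega Ps -> R) (u : R) : R :=
  Pr Ps (fun w => X w > u).

Definition lim_infty (f : R -> R) (L : R) : Prop :=
  forall eps, eps > 0 -> exists M, forall u, u >= M -> Rabs (f u - L) < eps.

Definition condP {Ps : prob_space} (Y : Omega Ps -> R) : Prop :=
  (forall u, u > 0 -> tail Y u > 0) /\
  exists a, a > 0 /\ lim_infty (fun u => tail Y (u + a) / tail Y u) 0.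

(* Main.v *)
Require Import Defs.
From Stdlib Require Import Reals ZArith Lra Lia Psatz Classical FunctionalExtensionality PropExtensionality.
Open Scope R_scope.

Lemma pred_ext {T : Type} (A B : T -> Prop) : (forall x, A x <-> B x) -> A = B.
Proof. intros H; apply functional_extensionality; intro x; apply propositional_extensionality; auto. Qed.

Lemma sa_ext {T : Type} (S : (T -> Prop) -> Prop) (A B : T -> Prop) :
  (forall x, A x <-> B x) -> S A -> S B.
Proof. intros H HA; rewrite <- (pred_ext A B H); exact HA. Qed.

Lemma sa_full {T} S : @is_sigma_algebra T S -> S (fun _ => True).
Proof. intros [H _]; exact H. Qed.

Lemma sa_compl {T} S A : @is_sigma_algebra T S -> S A -> S (fun x => ~ A x).
Proof. intros [_ [H _]] HA; exact (H A HA). Qed.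

Lemma sa_union {T} S (A : nat -> T -> Prop) : @is_sigma_algebra T S -> (forall n, S (A n)) -> S (fun x => exists n, A n x).
Proof. intros [_ [_ H]] HA; exact (H A HA). Qed.

Lemma sa_empty {T} S : @is_sigma_algebra T S -> S (fun _ => False).
Proof. intros H. apply (sa_ext S (fun x => ~ True)). { intros; tauto. } apply sa_compl; auto. apply sa_full; auto. Qed.

Lemma sa_or {T} S A B : @is_sigma_algebra T S -> S A -> S B -> S (fun x => A x \/ B x).
Proof.
  intros H HA HB.
  apply (sa_ext S (fun x => exists n, (match n with O => A | _ => B end) x)).
  { intros x; split. - intros [[|n] Hn]; auto. - intros [h|h]. exists O; auto. exists 1%nat; auto. }
  apply sa_union; auto. intros [|n]; auto.
Qed.

Lemma sa_and {T} S A B : @is_sigma_algebra T S -> S A -> S B -> S (fun x => A x /\ B x).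
Proof.
  intros H HA HB.
  apply (sa_ext S (fun x => ~ (~ A x \/ ~ B x))).
  { intros x; tauto. }
  apply sa_compl; auto. apply sa_or; auto; apply sa_compl; auto.
Qed.

Lemma sa_inter {T} S (A : nat -> T -> Prop) : @is_sigma_algebra T S -> (forall n, S (A n)) -> S (fun x => forall n, A n x).
Proof.
  intros H HA.
  apply (sa_ext S (fun x => ~ exists n, ~ A n x)).
  { intros x; split. - intros h n. apply NNPP; intro hn; apply h; exists n; exact hn. - intros h [n hn]; auto. }
  apply sa_compl; auto. apply sa_union; auto. intros; apply sa_compl; auto.
Qed.
 
 Lemma borel_sigma : is_sigma_algebra borel.
 Proof.
   split; [|split].
   - intros S HS _; apply sa_full; auto.
   - intros A HA S HS Hi; apply sa_compl; auto; apply HA; auto.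
  - intros A HA S HS Hi; apply sa_union; auto; intros n; apply HA; auto.
Qed.

Lemma borel_int a b : borel (fun x => a < x < b).
Proof. intros S HS Hi; apply Hi. Qed.

Lemma borel_gt c : borel (fun x => x > c).
Proof.
  apply (sa_ext borel (fun x => exists n, c < x < c + INR n + 1)).
  { intros x; split. - intros [n Hn]; lra. - intros Hx. destruct (INR_unbounded (x - c)) as [n Hn]. exists n; lra. }
  apply sa_union. apply borel_sigma. intros; apply borel_int.
Qed.

Lemma borel_lt c : borel (fun x => x < c).
Proof.
  apply (sa_ext borel (fun x => exists n, c - INR n - 1 < x < c)).
  { intros x; split. - intros [n Hn]; lra. - intros Hx. destruct (INR_unbounded (c - x)) as [n Hn]. exists n; lra. }
  apply sa_union. apply borel_sigma. intros; apply borel_int.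
Qed.

Lemma borel_Ico a b : borel (fun x => a <= x < b).
Proof.
  apply (sa_ext borel (fun x => ~ x < a /\ x < b)). { intros; lra. }
  apply sa_and. apply borel_sigma. apply sa_compl. apply borel_sigma. apply borel_lt. apply borel_lt.
Qed.

Lemma ev_sa (Ps : prob_space) : is_sigma_algebra (event Ps).
Proof. exact (event_sigma Ps). Qed.

Lemma sum_const p n : sum_f_R0 (fun _ => p) n = (INR n + 1) * p.
Proof. induction n; simpl sum_f_R0. simpl; ring. rewrite IHn, S_INR; ring. Qed.

Lemma Pr_empty (Ps : prob_space) : Pr Ps (fun _ => False) = 0.
Proof.
  pose proof (Pr_sigma_additive Ps (fun _ _ => False)) as H.
  assert (E : (fun w : Omega Ps => exists n : nat, False) = (fun _ => False)).
  { apply pred_ext; intros; split; [intros [_ f]; exact f | tauto]. }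
  cbv beta in H. rewrite E in H. set (p := Pr Ps (fun _ => False)) in *.
  assert (Hp : 0 <= p) by (apply Pr_nonneg, sa_empty, ev_sa).
  destruct (Rle_lt_or_eq_dec _ _ Hp) as [Hlt|Heq]; [|auto].
  exfalso. destruct (H (fun _ => sa_empty _ (ev_sa Ps)) (fun _ _ _ _ f _ => f) p Hlt) as [N HN].
  specialize (HN (S N) (Nat.le_succ_diag_r N)). rewrite sum_const in HN.
  unfold Rdist in HN. rewrite S_INR in HN. pose proof (pos_INR N).
  rewrite Rabs_right in HN; nra.
Qed.

Definition seq2 {T} (A B : T -> Prop) (n : nat) : T -> Prop :=
  match n with O => A | 1%nat => B | _ => fun _ => False end.

Lemma Pr_add (Ps : prob_space) (A B : Omega Ps -> Prop) :
  event Ps A -> event Ps B -> (forall w, A w -> B w -> False) ->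
  Pr Ps (fun w => A w \/ B w) = Pr Ps A + Pr Ps B.
Proof.
  intros HA HB Hd.
  pose proof (Pr_sigma_additive Ps (seq2 A B)) as H.
  assert (E : (fun w => exists n, seq2 A B n w) = (fun w => A w \/ B w)).
  { apply pred_ext; intros w; split.
    - intros [[|[|n]] h]; simpl in h; tauto.
    - intros [h|h]; [exists O|exists 1%nat]; exact h. }
  cbv beta in H. rewrite E in H.
  apply (uniqueness_sum (fun n => Pr Ps (seq2 A B n))).
  - apply H.
    + intros [|[|n]]; simpl; auto. apply sa_empty, ev_sa.
    + intros [|[|m]] [|[|n]] hmn w; simpl; try tauto; try lia; eauto.
  - intros eps Heps. exists 1%nat. intros n Hn.
    assert (S: sum_f_R0 (fun n => Pr Ps (seq2 A B n)) n = Pr Ps A + Pr Ps B).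
    { destruct n as [|n]; [lia|]. clear Hn. induction n. simpl; ring.
      simpl sum_f_R0 in *. rewrite IHn. simpl. rewrite Pr_empty; ring. }
    rewrite S; unfold Rdist. rewrite Rminus_diag, Rabs_R0; auto.
Qed.

Lemma Pr_mono (Ps : prob_space) (A B : Omega Ps -> Prop) :
  event Ps A -> event Ps B -> (forall w, A w -> B w) -> Pr Ps A <= Pr Ps B.
Proof.
  intros HA HB Hs.
  assert (E : B = (fun w => A w \/ (B w /\ ~ A w))).
  { apply pred_ext; intros w; split; [|firstorder]. intros h; destruct (classic (A w)); tauto. }
  rewrite E, Pr_add; auto.
  - assert (0 <= Pr Ps (fun w => B w /\ ~ A w)); [|lra].
    apply Pr_nonneg, sa_and; auto. apply ev_sa. apply sa_compl; auto; apply ev_sa.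
  - apply sa_and; auto. apply ev_sa. apply sa_compl; auto; apply ev_sa.
  - tauto.
Qed.

Lemma Pr_le1 (Ps : prob_space) A : event Ps A -> Pr Ps A <= 1.
Proof. intros HA. rewrite <- (Pr_full Ps). apply Pr_mono; auto. apply sa_full, ev_sa. Qed.

Lemma sum_le_bound (a : nat -> R) l K : infinite_sum a l -> (forall n, sum_f_R0 a n <= K) -> l <= K.
Proof.
  intros H Hb. destruct (Rle_or_lt l K) as [h|h]; auto. exfalso.
  destruct (H (l - K) ltac:(lra)) as [N HN]. specialize (HN N (le_n N)). specialize (Hb N).
  unfold Rdist in HN. apply Rabs_def2 in HN. lra.
Qed.

Lemma Pr_union_bound (Ps : prob_space) (E : nat -> Omega Ps -> Prop) K :
  (forall n, event Ps (E n)) -> (forall n w, E n w -> E (S n) w) ->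
  (forall n, Pr Ps (E n) <= K) -> Pr Ps (fun w => exists n, E n w) <= K.
Proof.
  intros HE Hinc HK.
  set (D := fun n => match n with O => E O | S m => fun w => E (S m) w /\ ~ E m w end).
  assert (Hmono : forall m k w, (m <= k)%nat -> E m w -> E k w).
  { intros m k w hk; induction hk; auto. }
  assert (HD : forall n, event Ps (D n)).
  { intros [|n]; unfold D; auto. apply sa_and; auto. apply ev_sa. apply sa_compl; auto. apply ev_sa. }
  assert (Hdis : forall m n, m <> n -> forall w, D m w -> D n w -> False).
  { intros m n hmn w.
    assert (gen : forall m n, (m < n)%nat -> D m w -> D n w -> False).
    { intros m' n' hlt h1 h2. destruct n' as [|n']; [lia|]. unfold D in h2. destruct h2 as [_ h2].
      apply h2. apply (Hmono m'); [lia|]. destruct m'; unfold D in h1; tauto. }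
    destruct (Nat.lt_total m n) as [h|[h|h]]; [eauto|lia|]. intros; eapply gen; eauto. }
  pose proof (Pr_sigma_additive Ps D HD Hdis) as H.
  assert (EU : (fun w => exists n, D n w) = (fun w => exists n, E n w)).
  { apply pred_ext; intros w; split.
    - intros [[|n] h]; unfold D in h; [exists O|exists (S n)]; tauto.
    - intros [n h]. induction n as [|n IH]. exists O; exact h.
      destruct (classic (E n w)) as [h'|h']; auto. exists (S n); unfold D; tauto. }
  rewrite EU in H. apply (sum_le_bound _ _ _ H).
  intros n. replace (sum_f_R0 (fun n => Pr Ps (D n)) n) with (Pr Ps (E n)); auto.
  induction n. reflexivity. simpl sum_f_R0. rewrite <- IHn.
  rewrite <- Pr_add; auto. f_equal. apply pred_ext; intros w; split.
  - intros h; destruct (classic (E n w)); unfold D; tauto.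
  - intros [h|h]; [apply Hinc; exact h| unfold D in h; tauto].
  - apply (HD (S n)).
  - tauto.
Qed.

Lemma sum_cmp (a b d : nat -> R) A B D c :
  infinite_sum a A -> infinite_sum b B -> infinite_sum d D -> 0 <= c ->
  (forall j, a j <= c * b j + d j) -> A <= c * B + D.
Proof.
  intros Ha Hb Hd Hc Hj.
  assert (Hp : forall n, sum_f_R0 a n <= c * sum_f_R0 b n + sum_f_R0 d n).
  { induction n; simpl; auto. specialize (Hj (S n)). nra. }
  destruct (Rle_or_lt A (c * B + D)) as [h|h]; auto. exfalso.
  set (e := (A - (c * B + D)) / (c + 2)).
  assert (He : e > 0) by (unfold e; apply Rdiv_lt_0_compat; lra).
  assert (Hce : (c + 2) * e = A - (c * B + D)) by (unfold e; field; lra).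
  destruct (Ha e He) as [N1 H1]. destruct (Hb e He) as [N2 H2]. destruct (Hd e He) as [N3 H3].
  set (n := (N1 + N2 + N3)%nat).
  specialize (H1 n ltac:(unfold n; lia)). specialize (H2 n ltac:(unfold n; lia)).
  specialize (H3 n ltac:(unfold n; lia)). specialize (Hp n).
  unfold Rdist in *. apply Rabs_def2 in H1. apply Rabs_def2 in H2. apply Rabs_def2 in H3.
  assert (c * sum_f_R0 b n <= c * (B + e)) by (apply Rmult_le_compat_l; lra).
  nra.
Qed.

Lemma floor_ex t d : 0 <= t -> 0 < d -> exists j : nat, INR j * d <= t < INR j * d + d.
Proof.
  intros Ht Hd. set (r := t / d).
  assert (Hr : 0 <= r) by (unfold r; apply Rmult_le_pos; [lra | apply Rlt_le, Rinv_0_lt_compat; lra]).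
  destruct (base_Int_part r) as [h1 h2].
  assert (Hk : (0 <= Int_part r)%Z).
  { assert (IZR (Int_part r) > -1) by lra.
    destruct (Z_le_gt_dec 0 (Int_part r)) as [z|z]; [exact z|].
    exfalso. assert (Int_part r <= -1)%Z by lia. apply IZR_le in H0. lra. }
  exists (Z.to_nat (Int_part r)).
  rewrite INR_IZR_INZ, Z2Nat.id by exact Hk.
  assert (t = r * d) by (unfold r; field; lra). split; nra.
Qed.

Definition dl (n : nat) : R := / (INR n + 1).
Definition xp (n j : nat) : R := - INR n + INR j * dl n.
Definition Iv (n j : nat) (t : R) : Prop := xp n j <= t < xp n j + dl n.
Definition Aset {Ps : prob_space} (Y X : Omega Ps -> R) (u : R) (n : nat) : Omega Ps -> Prop :=
  fun w => exists j, Iv n j (Y w) /\ X w > u - xp n j.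

Lemma dl_pos n : 0 < dl n.
Proof. unfold dl. apply Rinv_0_lt_compat. pose proof (pos_INR n); lra. Qed.

Lemma Iv_uniq n j k t : Iv n j t -> Iv n k t -> j = k.
Proof.
  unfold Iv, xp. intros h1 h2. pose proof (dl_pos n).
  destruct (Nat.lt_total j k) as [h|[h|h]]; auto; exfalso;
  apply le_INR in h; rewrite S_INR in h; nra.
Qed.

Lemma Iv_event (Ps : prob_space) (Y : Omega Ps -> R) n j :
  random_variable Y -> event Ps (fun w => Iv n j (Y w)).
Proof. intros rv. exact (rv _ (borel_Ico (xp n j) (xp n j + dl n))). Qed.

Lemma gt_event (Ps : prob_space) (Y : Omega Ps -> R) c :
  random_variable Y -> event Ps (fun w => Y w > c).
Proof. intros rv. exact (rv _ (borel_gt c)). Qed.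

Lemma Aset_event (Ps : prob_space) (Y X : Omega Ps -> R) u n :
  random_variable Y -> random_variable X -> event Ps (Aset Y X u n).
Proof.
  intros rY rX. unfold Aset. apply (sa_union _ (fun j w => Iv n j (Y w) /\ X w > u - xp n j)).
  apply ev_sa. intros j. apply sa_and. apply ev_sa. apply Iv_event; auto. apply gt_event; auto.
Qed.

Lemma Aset_sum (Ps : prob_space) (Y X : Omega Ps -> R) u n :
  random_variable Y -> random_variable X -> independent Y X ->
  infinite_sum (fun j => Pr Ps (fun w => Iv n j (Y w)) * tail X (u - xp n j)) (Pr Ps (Aset Y X u n)).
Proof.
  intros rY rX ind.
  pose proof (Pr_sigma_additive Ps (fun j w => Iv n j (Y w) /\ X w > u - xp n j)) as H.
  assert (E : (fun j => Pr Ps (fun w => Iv n j (Y w) /\ X w > u - xp n j)) =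
              (fun j => Pr Ps (fun w => Iv n j (Y w)) * tail X (u - xp n j))).
  { apply functional_extensionality; intros j. unfold tail.
    exact (ind (fun t => Iv n j t) (fun t => t > u - xp n j) (borel_Ico _ _) (borel_gt _)). }
  rewrite <- E. apply H.
  - intros j. apply sa_and. apply ev_sa. apply Iv_event; auto. apply gt_event; auto.
  - intros m k hmk w [h1 _] [h2 _]. apply hmk. eapply Iv_uniq; eauto.
Qed.

Lemma Aset_sub (Ps : prob_space) (Y X : Omega Ps -> R) u n w :
  Aset Y X u n w -> Y w + X w > u.
Proof. intros [j [[h1 h2] h3]]. lra. Qed.

Lemma Aset_ev (Ps : prob_space) (Y X : Omega Ps -> R) u w :
  Y w + X w > u -> exists N, forall n, Aset Y X u (N + n) w.
Proof.
  intros Hg. set (g := Y w + X w - u).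
  destruct (INR_unbounded (- Y w)) as [N1 H1].
  destruct (INR_unbounded (/ g)) as [N2 H2].
  exists (N1 + N2)%nat. intros n. set (m := (N1 + N2 + n)%nat).
  assert (Hm1 : INR N1 <= INR m) by (apply le_INR; unfold m; lia).
  assert (Hm2 : INR N2 <= INR m) by (apply le_INR; unfold m; lia).
  assert (Hgp : 0 < g) by (unfold g; lra).
  assert (Hd : dl m < g).
  { unfold dl. rewrite <- (Rinv_inv g). apply Rinv_lt_contravar.
    - apply Rmult_lt_0_compat. apply Rinv_0_lt_compat; lra. pose proof (pos_INR m); lra.
    - lra. }
  destruct (floor_ex (Y w + INR m) (dl m) ltac:(lra) (dl_pos m)) as [j Hj].
  exists j. unfold Iv, xp. unfold g in Hd. lra.
Qed.

Lemma target_event_bound (Ps : prob_space) (Y X : Omega Ps -> R) u :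
  random_variable Y -> random_variable X ->
  event Ps (fun w => Y w + X w > u) /\
  (forall K, (forall n, Pr Ps (Aset Y X u n) <= K) -> tail (fun w => Y w + X w) u <= K).
Proof.
  intros rY rX.
  set (E := fun N w => forall n, Aset Y X u (N + n) w).
  assert (HE : forall N, event Ps (E N)).
  { intros N. apply (sa_inter _ (fun n => Aset Y X u (N + n))). apply ev_sa. intros; apply Aset_event; auto. }
  assert (EU : (fun w => exists N, E N w) = (fun w => Y w + X w > u)).
  { apply pred_ext; intros w; split.
    - intros [N h]. apply (Aset_sub Ps Y X u (N + 0)). apply h.
    - intros h. exact (Aset_ev Ps Y X u w h). }
  split.
  - rewrite <- EU. apply sa_union; auto. apply ev_sa.
  - intros K HK. unfold tail. rewrite <- EU. apply Pr_union_bound; auto.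
    + intros N w h n. specialize (h (S n)). rewrite Nat.add_succ_r in h. rewrite Nat.add_succ_l. exact h.
    + intros N. eapply Rle_trans; [|apply (HK N)]. apply Pr_mono; auto. apply Aset_event; auto.
      intros w h. rewrite <- (Nat.add_0_r N). apply h.
Qed.

Lemma tail_nonneg (Ps : prob_space) (X : Omega Ps -> R) c : random_variable X -> 0 <= tail X c.
Proof. intros; apply Pr_nonneg, gt_event; auto. Qed.

Lemma tail_le1 (Ps : prob_space) (X : Omega Ps -> R) c : random_variable X -> tail X c <= 1.
Proof. intros; apply Pr_le1, gt_event; auto. Qed.

Lemma core (Ps : prob_space) (Y Z W : Omega Ps -> R)
  (rvY : random_variable Y) (rvZ : random_variable Z) (rvW : random_variable W)
  (indYZ : independent Y Z) (indYW : independent Y W) c M :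
  0 <= c -> (forall v, v >= M -> tail Z v <= c * tail W v) ->
  forall u, tail (fun w => Y w + Z w) u <= c * tail (fun w => Y w + W w) u + tail Y (u - M).
Proof.
  intros Hc HM u.
  destruct (target_event_bound Ps Y Z u rvY rvZ) as [_ HZ].
  destruct (target_event_bound Ps Y W u rvY rvW) as [HWe _].
  apply HZ. intros n.
  set (D := fun w => exists j, Iv n j (Y w) /\ Y w > u - M).
  assert (HDs : infinite_sum (fun j => Pr Ps (fun w => Iv n j (Y w) /\ Y w > u - M)) (Pr Ps D)).
  { apply (Pr_sigma_additive Ps (fun j w => Iv n j (Y w) /\ Y w > u - M)).
    - intros j. apply sa_and. apply ev_sa. apply Iv_event; auto. apply gt_event; auto.
    - intros m k hmk w [h1 _] [h2 _]. apply hmk. eapply Iv_uniq; eauto. }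
  assert (HDe : event Ps D).
  { apply (sa_union _ (fun j w => Iv n j (Y w) /\ Y w > u - M)). apply ev_sa.
    intros j. apply sa_and. apply ev_sa. apply Iv_event; auto. apply gt_event; auto. }
  assert (H1 : Pr Ps (Aset Y Z u n) <= c * Pr Ps (Aset Y W u n) + Pr Ps D).
  { apply (sum_cmp _ _ _ _ _ _ c (Aset_sum Ps Y Z u n rvY rvZ indYZ) (Aset_sum Ps Y W u n rvY rvW indYW) HDs Hc).
    intros j.
    pose proof (Pr_nonneg Ps _ (Iv_event Ps Y n j rvY)) as HI.
    pose proof (tail_nonneg Ps W (u - xp n j) rvW) as HtW.
    pose proof (tail_nonneg Ps Z (u - xp n j) rvZ) as HtZ.
    pose proof (tail_le1 Ps Z (u - xp n j) rvZ) as HtZ1.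
    assert (Hd0 : 0 <= Pr Ps (fun w => Iv n j (Y w) /\ Y w > u - M)).
    { apply Pr_nonneg. apply sa_and. apply ev_sa. apply Iv_event; auto. apply gt_event; auto. }
    assert (Hcb : 0 <= c * (Pr Ps (fun w => Iv n j (Y w)) * tail W (u - xp n j))).
    { apply Rmult_le_pos; auto. apply Rmult_le_pos; auto. }
    destruct (Rle_or_lt M (u - xp n j)) as [h|h].
    - specialize (HM (u - xp n j) (Rle_ge _ _ h)).
      assert (Pr Ps (fun w => Iv n j (Y w)) * tail Z (u - xp n j) <=
              Pr Ps (fun w => Iv n j (Y w)) * (c * tail W (u - xp n j))) by (apply Rmult_le_compat_l; auto).
      nra.
    - assert (E : (fun w => Iv n j (Y w) /\ Y w > u - M) = (fun w => Iv n j (Y w))).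
      { apply pred_ext; intros w; split; [tauto|]. intros hi; split; auto. destruct hi; lra. }
      rewrite E. 
      assert (Pr Ps (fun w => Iv n j (Y w)) * tail Z (u - xp n j) <= Pr Ps (fun w => Iv n j (Y w)) * 1)
        by (apply Rmult_le_compat_l; auto).
      lra. }
  assert (H2 : Pr Ps (Aset Y W u n) <= tail (fun w => Y w + W w) u).
  { apply Pr_mono; auto. apply Aset_event; auto. intros w; apply Aset_sub. }
  assert (H3 : Pr Ps D <= tail Y (u - M)).
  { apply Pr_mono; auto. apply gt_event; auto. intros w [j [_ h]]; exact h. }
  assert (c * Pr Ps (Aset Y W u n) <= c * tail (fun w => Y w + W w) u) by (apply Rmult_le_compat_l; auto).
  lra.
Qed.

Lemma lower (Ps : prob_space) (Y W : Omega Ps -> R) (rvY : random_variable Y) (rvW : random_variable W)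
  (ind : independent Y W) c0 u :
  tail Y (u - c0) * tail W c0 <= tail (fun w => Y w + W w) u.
Proof.
  unfold tail.
  rewrite <- (ind (fun t => t > u - c0) (fun t => t > c0) (borel_gt _) (borel_gt _)).
  destruct (target_event_bound Ps Y W u rvY rvW) as [HWe _].
  apply Pr_mono; auto.
  - apply sa_and. apply ev_sa. apply gt_event; auto. apply gt_event; auto.
  - intros w [h1 h2]; lra.
Qed.

Lemma ratio_bound (Ps : prob_space) (Y Z W : Omega Ps -> R)
  (rvY : random_variable Y) (rvZ : random_variable Z) (rvW : random_variable W)
  (hW : forall u, u > 0 -> tail W u > 0)
  (indYZ : independent Y Z) (indYW : independent Y W) (hY : condP Y) c :
  0 <= c -> (exists M, forall v, v >= M -> tail Z v <= c * tail W v) ->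
  forall eta, eta > 0 -> exists U, forall u, u >= U ->
    0 < tail (fun w => Y w + W w) u /\
    tail (fun w => Y w + Z w) u / tail (fun w => Y w + W w) u < c + eta.
Proof.
  intros Hc [M0 HM0] eta Heta.
  destruct hY as [hYp [a [Ha Hlim]]].
  set (M := Rmax M0 1).
  assert (HM : forall v, v >= M -> tail Z v <= c * tail W v).
  { intros v hv; apply HM0. unfold M in hv. pose proof (Rmax_l M0 1); lra. }
  assert (HM1 : M >= 1) by (unfold M; pose proof (Rmax_r M0 1); lra).
  set (c0 := M + a). set (p := tail W c0).
  assert (Hp : p > 0) by (apply hW; unfold c0; lra).
  destruct (Hlim (eta * p) ltac:(apply Rmult_lt_0_compat; lra)) as [U0 HU0].
  exists (Rmax (U0 + c0) (c0 + 1)). intros u Hu.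
  pose proof (Rmax_l (U0 + c0) (c0 + 1)). pose proof (Rmax_r (U0 + c0) (c0 + 1)).
  set (v := u - c0).
  assert (Hv : v >= U0) by (unfold v; lra).
  assert (Hv0 : v > 0) by (unfold v; lra).
  specialize (HU0 v Hv). cbv beta in HU0. rewrite Rminus_0_r in HU0.
  pose proof (hYp v Hv0) as HGv.
  assert (E : v + a = u - M) by (unfold v, c0; ring). rewrite E in HU0.
  apply Rabs_def2 in HU0. destruct HU0 as [HU0 _].
  assert (Hsmall : tail Y (u - M) < eta * p * tail Y v).
  { apply (Rmult_lt_compat_r (tail Y v)) in HU0; auto.
    unfold Rdiv in HU0. rewrite Rmult_assoc, Rinv_l, Rmult_1_r in HU0; lra. }
  pose proof (lower Ps Y W rvY rvW indYW c0 u) as Hlow. fold v p in Hlow.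
  pose proof (core Ps Y Z W rvY rvZ rvW indYZ indYW c M Hc HM u) as Hcore.
  set (g := tail (fun w => Y w + W w) u) in *.
  set (f := tail (fun w => Y w + Z w) u) in *.
  assert (Hg : 0 < g) by (apply Rlt_le_trans with (tail Y v * p); [apply Rmult_lt_0_compat|]; lra).
  split; auto.
  apply (Rmult_lt_reg_r g); auto. unfold Rdiv. rewrite Rmult_assoc, Rinv_l, Rmult_1_r by lra.
  nra.
Qed.

Lemma div_lt_of F G k : 0 < G -> F < k * G -> F / G < k.
Proof. intros HG H. apply (Rmult_lt_reg_r G); auto. unfold Rdiv; rewrite Rmult_assoc, Rinv_l, Rmult_1_r; lra. Qed.

Lemma lt_of_div_lt F G k : 0 < G -> F / G < k -> F < k * G.
Proof. intros HG H. apply (Rmult_lt_compat_r G) in H; auto. unfold Rdiv in H; rewrite Rmult_assoc, Rinv_l, Rmult_1_r in H; lra. Qed.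

Lemma gt_of_div_gt F G k : 0 < G -> k < F / G -> k * G < F.
Proof. intros HG H. apply (Rmult_lt_compat_r G) in H; auto. unfold Rdiv in H; rewrite Rmult_assoc, Rinv_l, Rmult_1_r in H; lra. Qed.

Theorem lemma1 (Ps : prob_space) (Y Z W : Omega Ps -> R)
  (rvY : random_variable Y) (rvZ : random_variable Z) (rvW : random_variable W)
  (hZ : forall u, u > 0 -> tail Z u > 0)
  (hW : forall u, u > 0 -> tail W u > 0)
  (indYZ : independent Y Z) (indYW : independent Y W)
  (hY : condP Y) :
  (lim_infty (fun u => tail Z u / tail W u) 1 ->
   lim_infty (fun u => tail (fun w => Y w + Z w) u / tail (fun w => Y w + W w) u) 1) /\
  (lim_infty (fun u => tail Z u / tail W u) 0 ->
   lim_infty (fun u => tail (fun w => Y w + Z w) u / tail (fun w => Y w + W w) u) 0).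
Proof.
  split.
  - intros Hl eps Heps.
    set (e := Rmin (eps / 4) (1 / 2)).
    assert (He : 0 < e) by (unfold e; apply Rmin_glb_lt; lra).
    assert (He1 : e <= eps / 4) by apply Rmin_l.
    assert (He2 : e <= 1 / 2) by apply Rmin_r.
    destruct (Hl e He) as [M1 HM1].
    set (M := Rmax M1 1).
    assert (HMv : forall v, v >= M -> tail Z v < (1 + e) * tail W v /\ tail W v <= (1 + 2 * e) * tail Z v).
    { intros v hv. pose proof (Rmax_l M1 1); pose proof (Rmax_r M1 1).
      specialize (HM1 v ltac:(unfold M in hv; lra)). apply Rabs_def2 in HM1. destruct HM1 as [h1 h2].
      pose proof (hW v ltac:(unfold M in hv; lra)) as hw.
      split.
      - apply lt_of_div_lt; auto; lra.
      - apply Rlt_le. assert (hh : (1 - e) * tail W v < tail Z v) by (apply gt_of_div_gt; auto; lra).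
        assert (h3 : (1 + 2 * e) * ((1 - e) * tail W v) < (1 + 2 * e) * tail Z v) by (apply Rmult_lt_compat_l; lra).
        assert (h4 : 0 <= e * (1 - 2 * e) * tail W v) by (apply Rmult_le_pos; [apply Rmult_le_pos|]; lra).
        lra. }
    destruct (ratio_bound Ps Y Z W rvY rvZ rvW hW indYZ indYW hY (1 + e) ltac:(lra)
      (ex_intro _ M (fun v hv => Rlt_le _ _ (proj1 (HMv v hv)))) e He) as [U1 HU1].
    destruct (ratio_bound Ps Y W Z rvY rvW rvZ hZ indYW indYZ hY (1 + 2 * e) ltac:(lra)
      (ex_intro _ M (fun v hv => proj2 (HMv v hv))) e He) as [U2 HU2].
    exists (Rmax U1 U2). intros u hu. pose proof (Rmax_l U1 U2); pose proof (Rmax_r U1 U2).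
    destruct (HU1 u ltac:(lra)) as [hg h1]. destruct (HU2 u ltac:(lra)) as [hf h2].
    set (F := tail (fun w => Y w + Z w) u) in *. set (G := tail (fun w => Y w + W w) u) in *.
    apply lt_of_div_lt in h1; auto. apply lt_of_div_lt in h2; auto.
    apply Rabs_def1.
    + assert (F / G < 1 + eps) by (apply div_lt_of; auto; nra). lra.
    + assert (1 - eps < F / G); [|lra].
      apply (Rmult_lt_reg_r G); auto. unfold Rdiv; rewrite Rmult_assoc, Rinv_l, Rmult_1_r by lra. nra.
  - intros Hl eps Heps.
    set (e := eps / 2).
    assert (He : 0 < e) by (unfold e; lra).
    destruct (Hl e He) as [M1 HM1].
    set (M := Rmax M1 1).
    assert (HMv : forall v, v >= M -> tail Z v <= e * tail W v).
    { intros v hv. pose proof (Rmax_l M1 1); pose proof (Rmax_r M1 1).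
      specialize (HM1 v ltac:(unfold M in hv; lra)). apply Rabs_def2 in HM1. destruct HM1 as [h1 h2].
      pose proof (hW v ltac:(unfold M in hv; lra)) as hw.
      apply Rlt_le, lt_of_div_lt; auto; lra. }
    destruct (ratio_bound Ps Y Z W rvY rvZ rvW hW indYZ indYW hY e ltac:(lra)
      (ex_intro _ M HMv) e He) as [U1 HU1].
    exists U1. intros u hu. destruct (HU1 u hu) as [hg h1].
    pose proof (Pr_nonneg Ps _ (proj1 (target_event_bound Ps Y Z u rvY rvZ))) as hf.
    set (F := tail (fun w => Y w + Z w) u) in *. set (G := tail (fun w => Y w + W w) u) in *.
    assert (0 <= F / G).
    { unfold Rdiv. apply Rmult_le_pos. apply hf. apply Rlt_le, Rinv_0_lt_compat; auto. }
    rewrite Rminus_0_r. rewrite Rabs_right by lra. unfold e in h1; lra.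
Qed.
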